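(* Let $n\geq 3$ and let $L\cong\mathbf{2}^n$ be a Boolean lattice. Then $\operatorname{sdim}_M\bigl(G^c(L)\bigr)=2^n-2^{n-1}-1$.
   Context: For a bounded lattice $M$ with $0$, $Z^*(M)=\{a\in M\setminus\{0\}:\ a\wedge b=0 \text{ for some } b\neq 0\}$. The graph $G^c(M)$ has vertex set $Z^*(M)$, two distinct vertices $a,b$ adjacent iff $a\wedge b\neq 0$. For a connected graph $G$, a vertex $w$ strongly resolves $u,v$ if some shortest $u$–$w$ path contains $v$ or some shortest $v$–$w$ path contains $u$; a set $W$ is a strong resolving set if every pair of distinct vertices is strongly resolved by some vertex of $W$; $\operatorname{sdim}_M(G)$ is the minimum size of a strong resolving set. *)

(* Defs.v *)
From mathcomp Require Import all_boot all_order.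
Set Implicit Arguments. Unset Strict Implicit. Unset Printing Implicit Defensive.
Import Order.TTheory.
Local Open Scope order_scope.

Section Graph.
Variable T : finType.
Variables (V : {set T}) (e : rel T).

(* p is (the tail of) a u–w path in the graph: consecutive vertices adjacent,
   all vertices in V, ending at w; its length is size p. *)
Definition gpath (u w : T) (p : seq T) : Prop :=
  [/\ path e u p, all (fun x => x \in V) (u :: p) & last u p = w].

Definition shortest_path (u w : T) (p : seq T) : Prop :=
  gpath u w p /\ forall q, gpath u w q -> size p <= size q.

Definition connected_graph : Prop :=
  forall u w, u \in V -> w \in V -> exists p, gpath u w p.

Definition strongly_resolves (w u v : T) : Prop :=
  (exists p, shortest_path u w p /\ v \in u :: p) \/
  (exists p, shortest_path v w p /\ u \in v :: p).

Definition strong_resolving_set (W : {set T}) : Prop :=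
  W \subset V /\
  forall u v, u \in V -> v \in V -> u != v ->
    exists2 w, w \in W & strongly_resolves w u v.

Definition sdim_is (k : nat) : Prop :=
  (exists W, strong_resolving_set W /\ #|W| = k) /\
  (forall W, strong_resolving_set W -> k <= #|W|).
End Graph.

Section ZeroDivisorGraph.
Variables (d : Order.disp_t) (M : finTBLatticeType d).

Definition Zstar : {set M} :=
  [set a | (a != \bot) && [exists b, (b != \bot) && (a `&` b == \bot)]].

Definition Gc_adj : rel M := fun a b => (a != b) && (a `&` b != \bot).
End ZeroDivisorGraph.

(* Main.v *)
Require Import Defs.
From mathcomp Require Import all_boot all_order.
Set Implicit Arguments. Unset Strict Implicit. Unset Printing Implicit Defensive.
Import Order.TTheory.

Section Proof.
Variables (n : nat) (d : Order.disp_t) (L : finTBLatticeType d)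
  (f : L -> {set 'I_n}) (g : {set 'I_n} -> L).
Hypotheses (n3 : 3 <= n) (fK : cancel f g) (gK : cancel g f)
  (fmono : forall x y : L, (f x \subset f y) = (x <= y)%O).

Local Notation V := (Zstar L).
Local Notation e := (@Gc_adj d L).

Lemma finj : injective f. Proof. exact: can_inj fK. Qed.

Lemma f_bot : f \bot%O = set0.
Proof.
apply/eqP; rewrite -subset0; have := fmono \bot%O (g set0).
by rewrite gK le0x.
Qed.

Lemma f_top : f \top%O = setT.
Proof. by apply/eqP; rewrite eqEsubset subsetT /= -{1}(gK setT) fmono lex1. Qed.

Lemma f_meet x y : f (x `&` y)%O = f x :&: f y.
Proof.
apply/eqP; rewrite eqEsubset subsetI !fmono leIl leIr /=.
by rewrite -{1}(gK (f x :&: f y)) fmono lexI -!fmono gK subsetIl subsetIr.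
Qed.

Lemma meet_bot x y : ((x `&` y)%O == \bot%O) = (f x :&: f y == set0).
Proof. by rewrite -f_meet -f_bot (inj_eq finj). Qed.

Lemma setC_eq0 (A : {set 'I_n}) : (~: A == set0) = (A == setT).
Proof. by rewrite -(setCT 'I_n) (inj_eq (@setC_inj _)). Qed.

Lemma setC_eqT (A : {set 'I_n}) : (~: A == setT) = (A == set0).
Proof. by rewrite -(setC0 'I_n) (inj_eq (@setC_inj _)). Qed.

Lemma Zstar_f x : (x \in V) = (f x != set0) && (f x != setT).
Proof.
rewrite /Zstar inE -(inj_eq finj) f_bot; case: (boolP (f x == set0)) => //= Hx.
apply/existsP/idP.
  case=> b /andP[Hb Hxb]; apply/negP => /eqP HT.
  by move: Hxb Hb; rewrite meet_bot HT setTI -(inj_eq finj) f_bot => ->.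
move=> HT; exists (g (~: f x)); rewrite meet_bot gK setICr eqxx andbT.
by rewrite -(inj_eq finj) f_bot gK setC_eq0.
Qed.

Lemma adj_f x y : e x y = (x != y) && (f x :&: f y != set0).
Proof. by rewrite /Gc_adj meet_bot. Qed.


Lemma Vin_ne0 x : x \in V -> f x != set0.
Proof. by rewrite Zstar_f => /andP[]. Qed.

Lemma middle x y : x \in V -> y \in V -> f x :&: f y == set0 ->
  exists z, [/\ z \in V, e x z & e z y].
Proof.
move=> Hx Hy Hxy.
case/set0Pn: (Vin_ne0 Hx) => a Ha; case/set0Pn: (Vin_ne0 Hy) => b Hb.
have Hab : a \in f x :&: [set a; b] by rewrite !inE Ha eqxx.
have Hba : b \in [set a; b] :&: f y by rewrite !inE Hb eqxx orbT.
have nb : b \notin f x.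
  by apply: contraT; rewrite negbK => Hbx; move: Hxy; rewrite -subset0 => /subsetP /(_ b); rewrite !inE Hbx Hb => /(_ isT).
have na : a \notin f y.
  by apply: contraT; rewrite negbK => Hay; move: Hxy; rewrite -subset0 => /subsetP /(_ a); rewrite !inE Hay Ha => /(_ isT).
exists (g [set a; b]); split.
- rewrite Zstar_f gK; apply/andP; split; first by apply/set0Pn; exists a; rewrite !inE eqxx.
  apply/negP => /eqP HT; have := cards2 a b; rewrite HT cardsT card_ord.
  by case: (a != b) => Hn; move: n3; rewrite Hn.
- rewrite adj_f gK; apply/andP; split; last by apply/set0Pn; exists a.
  by apply/negP => /eqP Hxz; move: nb; rewrite Hxz gK !inE eqxx orbT.
- rewrite adj_f gK; apply/andP; split; last by apply/set0Pn; exists b.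
  by apply/negP => /eqP Hxz; move: na; rewrite -Hxz gK !inE eqxx.
Qed.

Lemma gpath0 u w : gpath V e u w [::] -> u = w.
Proof. by case. Qed.

Lemma gpath1 u w x : gpath V e u w [:: x] -> x = w /\ e u w.
Proof. by case=> /= /andP[Hux _] _ Hxw; subst. Qed.

Lemma gpath_in u w p : gpath V e u w p -> w \in V.
Proof. by case=> _ /allP Ha <-; apply: Ha; apply: mem_last. Qed.

Lemma path2 u w : u \in V -> w \in V ->
  exists p, shortest_path V e u w p /\ size p <= 2.
Proof.
move=> Hu Hw.
case: (eqVneq u w) => [<-|Huw].
  by exists [::]; split=> //; split=> //; split=> //=; rewrite Hu.
case: (boolP (e u w)) => Hadj.
  exists [:: w]; split=> //; split.
    by split=> //=; rewrite ?Hadj ?Hu ?Hw.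
  by case=> [/gpath0 Heq|//]; move: Huw; rewrite Heq eqxx.
have Hd : f u :&: f w == set0 by move: Hadj; rewrite adj_f Huw /= negbK.
case: (middle Hu Hw Hd) => z [Hz Huz Hzw].
exists [:: z; w]; split=> //; split.
  by split=> //=; rewrite ?Huz ?Hzw ?Hu ?Hz ?Hw.
case=> [/gpath0 Heq|x [|//]]; first by move: Huw; rewrite Heq eqxx.
by case/gpath1=> _ H; move: Hadj; rewrite H.
Qed.

Lemma res_disj u v w p : u != v -> ~~ e u v ->
  shortest_path V e u w p -> v \in u :: p -> w = v.
Proof.
move=> Huv Hnuv [Hp Hmin] Hv.
have Hu : u \in V by case: Hp => _ /andP[].
have Hw := gpath_in Hp.
case: (path2 Hu Hw) => q [[Hq _] Hs]; have := leq_trans (Hmin q Hq) Hs.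
case: p Hp Hmin Hv => [|x [|y [|//]]] Hp _ Hv _.
- by move: Hv; rewrite inE eq_sym (negbTE Huv).
- case: Hp => _ _ /= <-; move: Hv; rewrite !inE eq_sym (negbTE Huv) /=.
  by move/eqP.
- case: Hp => /= /and3P[Hux _ _] _ <-.
  move: Hv; rewrite !inE eq_sym (negbTE Huv) /=; case/orP=> /eqP Hvx //.
  by move: Hnuv; rewrite Hvx Hux.
Qed.


Lemma n_pos : 0 < n. Proof. exact: leq_trans n3. Qed.
Let i0 : 'I_n := Ordinal n_pos.
Let W0 : {set L} := [set x in V | i0 \notin f x].

Lemma W0E x : (x \in W0) = (x \in V) && (i0 \notin f x).
Proof. by rewrite [in LHS]inE. Qed.


Lemma resolve_self u v : u \in V -> v \in V ->
  strongly_resolves V e u u v /\ strongly_resolves V e v u v.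
Proof.
move=> Hu Hv; split.
  right; case: (path2 Hv Hu) => p [Hp _]; exists p; split=> //.
  by case: Hp => [[_ _ <-] _]; apply: mem_last.
left; case: (path2 Hu Hv) => p [Hp _]; exists p; split=> //.
by case: Hp => [[_ _ <-] _]; apply: mem_last.
Qed.

Lemma res_sub u v : u \in V -> v \in V -> i0 \in f u -> i0 \in f v ->
  ~~ (f v \subset f u) ->
  exists2 w, w \in W0 & exists p, shortest_path V e u w p /\ v \in u :: p.
Proof.
move=> Hu Hv Hiu Hiv Hs.
have Hne : f v :\: f u != set0 by rewrite setD_eq0.
have Hni : i0 \notin f v :\: f u by rewrite !inE Hiu.
have Hw : g (f v :\: f u) \in V.
  rewrite Zstar_f gK Hne /=; apply: contraNneq Hni => ->; by rewrite inE.
have Huv : u != v by apply: contraNneq Hs => ->.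
exists (g (f v :\: f u)).
  by rewrite W0E Hw gK Hni.
exists [:: v; g (f v :\: f u)]; split; last by rewrite !inE eqxx orbT.
split.
  have E1 : e u v.
    by rewrite adj_f Huv /=; apply/set0Pn; exists i0; rewrite inE Hiu Hiv.
  have E2 : e v (g (f v :\: f u)).
    rewrite adj_f gK; apply/andP; split.
      by apply/negP => /eqP Hvw; move: Hni; rewrite -[f v :\: f u]gK -Hvw Hiv.
    by rewrite setIDA setIid.
  split=> //=; first by rewrite E1 E2.
  by apply/and4P; split.
case=> [/gpath0 Heq|x [|//]].
  by move: Hni; rewrite -[f v :\: f u]gK -Heq Hiu.
case/gpath1=> _; rewrite adj_f gK => /andP[_].
by rewrite setDE setICA setICr setI0 eqxx.
Qed.

Lemma W0_res : strong_resolving_set V e W0.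
Proof.
split; first by apply/subsetP => x; rewrite W0E => /andP[].
move=> u v Hu Hv Huv.
case: (boolP (u \in W0)) => HuW; first by exists u => //; case: (resolve_self Hu Hv).
case: (boolP (v \in W0)) => HvW; first by exists v => //; case: (resolve_self Hu Hv).
move: HuW HvW; rewrite !W0E Hu Hv /= !negbK => Hiu Hiv.
case: (boolP (f v \subset f u)) => Hs.
  have Hs' : ~~ (f u \subset f v).
    apply: contra Huv => Hs'; apply/eqP; apply: finj; apply/eqP.
    by rewrite eqEsubset Hs Hs'.
  case: (res_sub Hv Hu Hiv Hiu Hs') => w Hw Hp; exists w => //; by right.
case: (res_sub Hu Hv Hiu Hiv Hs) => w Hw Hp; exists w => //; by left.
Qed.


Lemma card_W0 : #|W0| = 2 ^ (n - 1) - 1.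
Proof.
have -> : W0 = g @: (powerset [set~ i0] :\ set0).
  apply/setP => x; rewrite -{2}[x]fK mem_imset; last exact: can_inj gK.
  rewrite W0E Zstar_f !inE.
  have -> : (f x \subset [set~ i0]) = (i0 \notin f x).
    apply/subsetP/idP => [H|H y Hy]; first by apply/negP => /H; rewrite !inE eqxx.
    by rewrite !inE; apply: contraNneq H => <-.
  case: (boolP (i0 \in f x)); rewrite ?andbF //= => Hi; rewrite andbT.
  suff -> : f x != setT by [].
  by apply: contraNneq Hi => ->; rewrite inE.
rewrite card_imset; last exact: can_inj gK.
have := cardsD1 set0 (powerset [set~ i0]).
rewrite card_powerset cardsC1 card_ord powersetE sub0set add1n => H.
by rewrite !subn1 H.
Qed.

Let c x := g (~: f x).

Lemma c_facts x : x \in V -> [/\ c x \in V, x != c x, ~~ e x (c x) & ~~ e (c x) x].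
Proof.
move=> Hx; have Hx' := Hx; rewrite Zstar_f in Hx'; case/andP: Hx' => H0 HT.
have Hcx : c x \in V by rewrite Zstar_f gK setC_eq0 setC_eqT H0 HT.
have Hneq : x != c x.
  apply/negP => /eqP Hc; have Heq : f x = ~: f x by rewrite {1}Hc /c gK.
  case/set0Pn: H0 => a Ha; move: (Ha); rewrite {1}Heq inE Ha; by [].
split=> //; rewrite adj_f /c gK; first by rewrite setICr eqxx andbF.
by rewrite setIC setICr eqxx andbF.
Qed.

Lemma lower W : strong_resolving_set V e W -> #|W0| <= #|W|.
Proof.
case=> HWV HW.
pose h x := if x \in W then x else c x.
have Hh : {in W0 &, injective h}.
  move=> x y; rewrite !W0E => /andP[Hx Hix] /andP[Hy Hiy]; rewrite /h.
  case: (x \in W); case: (y \in W) => // Hxy.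
  - by move: Hix; rewrite Hxy /c gK inE Hiy.
  - by move: Hiy; rewrite -Hxy /c gK inE Hix.
  - by apply: finj; apply: setC_inj; rewrite -[~: f x]gK -[~: f y]gK; congr f.
rewrite -(card_in_imset Hh); apply: subset_leq_card; apply/subsetP => z.
case/imsetP => x; rewrite W0E => /andP[Hx _] ->.
case: (c_facts Hx) => Hcx Hneq H1 H2.
case: (HW x (c x) Hx Hcx Hneq) => w Hw [[p [Hp Hin]]|[p [Hp Hin]]].
- have Hwc := res_disj Hneq H1 Hp Hin; rewrite /h; case: ifP => //.
  by rewrite -Hwc.
- rewrite eq_sym in Hneq; have Hwc := res_disj Hneq H2 Hp Hin.
  by rewrite /h -Hwc Hw.
Qed.

End Proof.

Theorem corollary3p21 (n : nat) (d : Order.disp_t) (L : finTBLatticeType d)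
  (f : L -> {set 'I_n}) :
  3 <= n ->
  bijective f ->
  (forall x y : L, (f x \subset f y) = (x <= y)%O) ->
  connected_graph (Zstar L) (@Gc_adj d L) /\
  sdim_is (Zstar L) (@Gc_adj d L) (2 ^ n - 2 ^ (n - 1) - 1).
Proof.
move=> n3 [g fK gK] fmono.
split.
  move=> u w Hu Hw; case: (path2 n3 fK gK fmono Hu Hw) => p [[Hp _] _].
  by exists p.
have -> : 2 ^ n - 2 ^ (n - 1) - 1 = 2 ^ (n - 1) - 1.
  have : 0 < n by exact: n_pos n3.
  move: (n - 1) (subnK (n_pos n3)) => m; rewrite addn1 => <- _.
  by rewrite expnS mul2n -addnn addnK.
split.
  exists [set x in Zstar L | Ordinal (n_pos n3) \notin f x]; split.
    exact: W0_res.
  exact: card_W0.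
move=> W HW; rewrite -(card_W0 n3 fK gK fmono); exact: lower.
Qed.
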